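(* Consider a trajectory of the no-slip billiard in a solid cylinder $\mathcal{B}\subset\mathbb{R}^n$ with axis vector $e$, under no forces, that is transversely periodic of period $2$ (its projection to the transverse billiard in $e^\perp$ is periodic of period $2$, so the collision normals alternate between two values and all intercollision times are equal; this common time is set to $1$, and $h_0=0$). Define $Q=\mathcal{A}_1\mathcal{A}_2$, $\mathcal{A}=\mathcal{A}_1$, and the row vector $\xi=(1+c,\,-s\nu_1^\dagger)$. Then $Q\in SO(n)$. Let $P$ be the orthogonal projection onto the eigenspace of $Q$ for the eigenvalue $1$. Then $$h_\ell=\hat h_\ell+\Big\lfloor\frac{\ell}{2}\Big\rfloor\xi P\Lambda_0,$$ where $(\hat h_\ell)$ is a bounded sequence. Consequently $\lim_{\ell\to\infty}h_\ell/\ell=\frac12\xi P\Lambda_0$. In particular, if $1$ is not in the spectrum of $Q$, the orbit is bounded; if $\xi$ is not orthogonal to the eigenspace of $Q$ for the eigenvalue $1$, then for generic initial conditions the orbit is not bounded.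
   Context: The particle is a ball of radius $r>0$ with rotationally symmetric mass distribution of total mass $m$ and second-moment matrix per unit mass $\lambda I$, $\lambda=(r\gamma)^2/2$, $\gamma>0$; $c=\frac{1-\gamma^2}{1+\gamma^2}$, $s=\frac{2\gamma}{1+\gamma^2}$; $(a\wedge b)x=(a\cdot x)b-(b\cdot x)a$. The solid cylinder is $\mathcal{B}=\overline{\mathcal{B}}\times\mathbb{R}e$ with $\overline{\mathcal{B}}\subset W:=e^\perp$ (the set of admissible centers); $\nu_a\in W$ is the inward unit normal at a regular boundary point $a$. A state is $(a,u,U)$, $u$ the center-of-mass velocity, $U\in\mathfrak{so}(n)$ the angular velocity matrix. Between collisions $U$ is constant and the center of mass moves freely; at a collision at $a$ the pre-collision $(u,U)$ is replaced by $C_a(u,U)=\big(cu-\tfrac{s}{\gamma}(u\cdot\nu_a)\nu_a+s\gamma rU\nu_a,\ \tfrac{s}{\gamma r}\nu_a\wedge u+U-\tfrac{s}{\gamma}\nu_a\wedge U\nu_a\big)$. For the $j$th collision at $a_j$ ($j=0,1,\dots$), $\nu_j=\nu_{a_j}$, $(u_j,U_j)$ are the post-collision velocities, $h_j=a_j\cdot e$, $\sigma_j=u_j\cdot e$, $w_j=\gamma rU_je$, $\Lambda_j=(\sigma_j,w_j)\in\mathbb{R}\oplus W\cong\mathbb{R}^n$. For a boundary point $a$ let $\Pi_a$ be the orthogonal projection onto $\{w\in W:w\cdot\nu_a=0\}$ and $\mathcal{A}(a)$ the linear map of $\mathbb{R}\oplus W$ with block matrix $\begin{pmatrix}c&-s\nu_a^\dagger\\-s\nu_a&-c\nu_a\nu_a^\dagger+\Pi_a\end{pmatrix}$;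 $\mathcal{A}_i=\mathcal{A}(a_i)$. *)

(* Defs.v *)
From mathcomp Require Import all_boot all_order all_algebra.
From mathcomp Require Import all_classical all_reals all_analysis.
Set Implicit Arguments. Unset Strict Implicit. Unset Printing Implicit Defensive.
Import Order.TTheory GRing.Theory Num.Theory.
Local Open Scope ring_scope.

Definition dotv (R : realType) (n : nat) (x y : 'cV[R]_n) : R := (x^T *m y) 0 0.

Definition wedge (R : realType) (n : nat) (a b : 'cV[R]_n) : 'M[R]_n :=
  b *m a^T - a *m b^T.

Definition cpar (R : realType) (gamma : R) : R := (1 - gamma ^+ 2) / (1 + gamma ^+ 2).
Definition spar (R : realType) (gamma : R) : R := (2 * gamma) / (1 + gamma ^+ 2).

(* The collision map C_a, where nu = nu_a is the normal at the collision point. *)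
Definition collision (R : realType) (n : nat) (gamma r : R) (nu : 'cV[R]_n)
    (uU : 'cV[R]_n * 'M[R]_n) : 'cV[R]_n * 'M[R]_n :=
  let: (u, U) := uU in
  let c := cpar gamma in let s := spar gamma in
  (c *: u - ((s / gamma) * dotv u nu) *: nu + (s * gamma * r) *: (U *m nu),
   (s / (gamma * r)) *: wedge nu u + U - (s / gamma) *: wedge nu (U *m nu)).

(* Identification R (+) W ~ R^n, (sigma, w) |-> sigma e + w  (W = e^perp). *)
Definition iota (R : realType) (n : nat) (e : 'cV[R]_n) (sigma : R) (w : 'cV[R]_n)
  : 'cV[R]_n := sigma *: e + w.

Definition Lambda (R : realType) (n : nat) (gamma r : R) (e u : 'cV[R]_n)
    (U : 'M[R]_n) : 'cV[R]_n :=
  iota e (dotv u e) ((gamma * r) *: (U *m e)).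

(* Pi_a : orthogonal projection onto {w in W | w.nu = 0}, extended by 0 on R e. *)
Definition PiW (R : realType) (n : nat) (e nu : 'cV[R]_n) : 'M[R]_n :=
  1%:M - e *m e^T - nu *m nu^T.

(* The map A(a) of R (+) W with block matrix
     ( c        -s nu^T            )
     ( -s nu    -c nu nu^T + Pi_a  ),
   transported to R^n via iota (the four terms are the four blocks). *)
Definition Acal (R : realType) (n : nat) (gamma : R) (e nu : 'cV[R]_n) : 'M[R]_n :=
  let c := cpar gamma in let s := spar gamma in
  c *: (e *m e^T) - s *: (e *m nu^T) - s *: (nu *m e^T)
  + (- c *: (nu *m nu^T) + PiW e nu).

Definition transverse (R : realType) (n : nat) (e x : 'cV[R]_n) : 'cV[R]_n :=
  x - dotv x e *: e.

Definition is_orth_proj (R : realType) (n : nat) (P : 'M[R]_n) (S : 'cV[R]_n -> Prop)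
  : Prop :=
  P^T = P /\ P *m P = P /\ (forall v, S v <-> P *m v = v).

(* Main.v *)
Set Warnings "-all".
Require Import Defs.
From mathcomp Require Import all_boot all_order all_algebra.
From mathcomp Require Import all_classical all_reals all_analysis.
From mathcomp Require Import ring lra.
Import Order.TTheory GRing.Theory Num.Theory.
Import numFieldNormedType.Exports.
Set Implicit Arguments. Unset Strict Implicit. Unset Printing Implicit Defensive.
Local Open Scope classical_set_scope.
Local Open Scope ring_scope.

Lemma dotvE (R : realType) (n : nat) (x y : 'cV[R]_n) :
  dotv x y = \sum_i x i 0 * y i 0.
Proof. by rewrite /dotv mxE; apply: eq_bigr => i _; rewrite mxE. Qed.

Lemma dotvC (R : realType) (n : nat) (x y : 'cV[R]_n) : dotv x y = dotv y x.
Proof. by rewrite !dotvE; apply: eq_bigr => i _; rewrite mulrC. Qed.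

Lemma dotvDr (R : realType) (n : nat) (x y z : 'cV[R]_n) :
  dotv x (y + z) = dotv x y + dotv x z.
Proof. by rewrite !dotvE -big_split; apply: eq_bigr => i _; rewrite mxE mulrDr. Qed.

Lemma dotvZr (R : realType) (n : nat) k (x y : 'cV[R]_n) :
  dotv x (k *: y) = k * dotv x y.
Proof. by rewrite !dotvE mulr_sumr; apply: eq_bigr => i _; rewrite mxE mulrCA. Qed.

Lemma dotvNr (R : realType) (n : nat) (x y : 'cV[R]_n) :
  dotv x (- y) = - dotv x y.
Proof. by rewrite -scaleN1r dotvZr mulN1r. Qed.

Lemma dotvBr (R : realType) (n : nat) (x y z : 'cV[R]_n) :
  dotv x (y - z) = dotv x y - dotv x z.
Proof. by rewrite dotvDr dotvNr. Qed.

Lemma dotvDl (R : realType) (n : nat) (x y z : 'cV[R]_n) :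
  dotv (y + z) x = dotv y x + dotv z x.
Proof. by rewrite !(dotvC _ x) dotvDr. Qed.

Lemma dotvZl (R : realType) (n : nat) k (x y : 'cV[R]_n) :
  dotv (k *: y) x = k * dotv y x.
Proof. by rewrite !(dotvC _ x) dotvZr. Qed.

Lemma dotvNl (R : realType) (n : nat) (x y : 'cV[R]_n) :
  dotv (- y) x = - dotv y x.
Proof. by rewrite !(dotvC _ x) dotvNr. Qed.

Lemma dotvBl (R : realType) (n : nat) (x y z : 'cV[R]_n) :
  dotv (y - z) x = dotv y x - dotv z x.
Proof. by rewrite !(dotvC _ x) dotvBr. Qed.

Lemma dotv0r (R : realType) (n : nat) (x : 'cV[R]_n) : dotv x 0 = 0.
Proof. by rewrite dotvE big1 // => i _; rewrite mxE mulr0. Qed.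

Lemma dotv_ge0 (R : realType) (n : nat) (x : 'cV[R]_n) : 0 <= dotv x x.
Proof. by rewrite dotvE sumr_ge0 // => i _; rewrite -expr2 sqr_ge0. Qed.

Lemma dotv_mull (R : realType) (n : nat) (A : 'M[R]_n) (x y : 'cV[R]_n) :
  dotv (A *m x) y = dotv x (A^T *m y).
Proof. by rewrite /dotv trmx_mul mulmxA. Qed.

Lemma outer_mul (R : realType) (n : nat) (x y z : 'cV[R]_n) :
  (x *m y^T) *m z = dotv y z *: x.
Proof. by rewrite -mulmxA [y^T *m z]mx11_scalar mul_mx_scalar. Qed.

Lemma wedge_mul (R : realType) (n : nat) (x y z : 'cV[R]_n) :
  wedge x y *m z = dotv x z *: y - dotv y z *: x.
Proof. by rewrite /wedge mulmxBl !outer_mul. Qed.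

Lemma dot_abs_le (R : realType) (n : nat) (x y : 'cV[R]_n) :
  `|dotv x y| <= (dotv x x + dotv y y) / 2.
Proof.
have h1 := dotv_ge0 (x - y); have h2 := dotv_ge0 (x + y).
rewrite !(dotvBl, dotvBr, dotvDl, dotvDr) (dotvC y x) in h1 h2.
rewrite ler_norml; apply/andP; split; lra.
Qed.

Lemma mx_eq_vec (R : realType) (n : nat) (A B : 'M[R]_n) :
  (forall v : 'cV[R]_n, A *m v = B *m v) -> A = B.
Proof.
move=> H; apply/matrixP => i j.
have := congr1 (fun M : 'cV[R]_n => M i 0) (H (delta_mx j 0)).
by rewrite -!colE !mxE.
Qed.

Lemma Acal_rank1 (R : realType) (n : nat) (gamma : R) (e nu : 'cV[R]_n) :
  Acal gamma e nu = 1%:M - (2 / (1 + gamma ^+ 2)) *: ((gamma *: e + nu) *m (gamma *: e + nu)^T).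
Proof.
have hg : 1 + gamma ^+ 2 != 0 by rewrite gt_eqF // ltr_pwDl // sqr_ge0.
have tZ : forall k (v : 'cV[R]_n), (k *: v)^T = k *: v^T by move=> k v; apply/matrixP=> i j; rewrite !mxE.
have tD : forall (v w : 'cV[R]_n), (v + w)^T = v^T + w^T by move=> v w; apply/matrixP=> i j; rewrite !mxE.
rewrite /Acal /PiW /cpar /spar tD tZ mulmxDl !mulmxDr.
rewrite -?scalemxAl -?scalemxAr.
move: (e *m e^T) (e *m nu^T) (nu *m e^T) (nu *m nu^T) => E X Y N.
apply/matrixP=> i j; rewrite !mxE; field; done.
Qed.

Lemma det_rank1 (R : realType) (n : nat) (x y : 'cV[R]_n) :
  \det (1%:M + x *m y^T) = 1 + dotv y x.
Proof.
pose M := block_mx (1%:M : 'M[R]_n) (- x) y^T (1%:M : 'M[R]_1).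
have E1 : M = block_mx 1%:M 0 y^T 1%:M *m block_mx 1%:M (- x) 0 (1%:M + y^T *m x).
  rewrite mulmx_block ?mul1mx ?mulmx1 ?mul0mx ?mulmx0 ?addr0 ?add0r mulmxN.
  by rewrite [1%:M + _]addrC addKr.
have E2 : M = block_mx 1%:M (- x) 0 1%:M *m block_mx (1%:M + x *m y^T) 0 y^T 1%:M.
  rewrite mulmx_block ?mul1mx ?mulmx1 ?mul0mx ?mulmx0 ?addr0 ?add0r mulNmx.
  by rewrite addrK.
have D1 : \det M = 1 + dotv y x.
  by rewrite /dotv E1 det_mulmx det_lblock det_ublock !det1 !mul1r det_mx11 !mxE eqxx mulr1n.
have D2 : \det M = \det (1%:M + x *m y^T).
  by rewrite E2 det_mulmx det_lblock det_ublock !det1 !mul1r mulr1.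
by rewrite -D1 D2.
Qed.

Lemma Acal_mul (R : realType) (n : nat) (gamma : R) (e nu x : 'cV[R]_n) :
  Acal gamma e nu *m x =
  x - (2 / (1 + gamma ^+ 2) * dotv (gamma *: e + nu) x) *: (gamma *: e + nu).
Proof. by rewrite Acal_rank1 mulmxBl mul1mx -scalemxAl outer_mul scalerA. Qed.

Lemma dotw (R : realType) (n : nat) (gamma : R) (e nu : 'cV[R]_n) :
  dotv e e = 1 -> dotv nu nu = 1 -> dotv nu e = 0 ->
  dotv (gamma *: e + nu) (gamma *: e + nu) = 1 + gamma ^+ 2.
Proof.
move=> ee nn ne.
rewrite !(dotvDl, dotvDr, dotvZl, dotvZr) ee nn ne (dotvC e nu) ne; ring.
Qed.

Lemma Acal_sym (R : realType) (n : nat) (gamma : R) (e nu : 'cV[R]_n) :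
  (Acal gamma e nu)^T = Acal gamma e nu.
Proof.
rewrite Acal_rank1; apply/matrixP => i j; rewrite !mxE eq_sym; congr (_ - _ * _).
by apply: eq_bigr => k _; rewrite !mxE mulrC.
Qed.

Lemma Acal_invol (R : realType) (n : nat) (gamma : R) (e nu : 'cV[R]_n) :
  dotv e e = 1 -> dotv nu nu = 1 -> dotv nu e = 0 ->
  Acal gamma e nu *m Acal gamma e nu = 1%:M.
Proof.
move=> ee nn ne; apply: mx_eq_vec => v; rewrite -mulmxA mul1mx !Acal_mul.
have hg : 1 + gamma ^+ 2 != 0 by rewrite gt_eqF // ltr_pwDl // sqr_ge0.
rewrite [dotv _ (v + _)]dotvDr dotvNr dotvZr dotw //.
rewrite -addrA -opprD -scalerDl.
set d := dotv _ v.
have -> : 2 / (1 + gamma ^+ 2) * d + 2 / (1 + gamma ^+ 2) * (d - 2 / (1 + gamma ^+ 2) * d * (1 + gamma ^+ 2)) = 0.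
  by field.
by rewrite scale0r oppr0 addr0.
Qed.

Lemma Acal_det (R : realType) (n : nat) (gamma : R) (e nu : 'cV[R]_n) :
  dotv e e = 1 -> dotv nu nu = 1 -> dotv nu e = 0 ->
  \det (Acal gamma e nu) = -1.
Proof.
move=> ee nn ne.
have hg : 1 + gamma ^+ 2 != 0 by rewrite gt_eqF // ltr_pwDl // sqr_ge0.
rewrite Acal_rank1 scalemxAl -mulNmx -scaleNr det_rank1 dotvZr dotw //.
field; done.
Qed.

Lemma skew_dot (R : realType) (n : nat) (U : 'M[R]_n) (x y : 'cV[R]_n) :
  U^T = - U -> dotv x (U *m y) = - dotv (U *m x) y.
Proof. by move=> hU; rewrite -{1}(trmxK U) -dotv_mull hU mulNmx dotvNl. Qed.

Lemma skew_dot0 (R : realType) (n : nat) (U : 'M[R]_n) (x : 'cV[R]_n) :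
  U^T = - U -> dotv x (U *m x) = 0.
Proof.
move=> hU; have := skew_dot x x hU; rewrite dotvC => h.
have : 2 * dotv (U *m x) x = 0 by rewrite mulr2n mulrDl mul1r {2}h subrr.
move=> /eqP; rewrite mulf_eq0 => /orP [|/eqP h0]; first by rewrite pnatr_eq0.
exact: h0.
Qed.

Lemma Lambda_step (R : realType) (n : nat) (gamma r : R) (e nu u : 'cV[R]_n) (U : 'M[R]_n) :
  0 < gamma -> 0 < r -> dotv e e = 1 -> dotv nu nu = 1 -> dotv nu e = 0 -> U^T = - U ->
  Lambda gamma r e (collision gamma r nu (u, U)).1 (collision gamma r nu (u, U)).2
  = Acal gamma e nu *m Lambda gamma r e u U.
Proof.
move=> g0 r0 ee nn ne hU.
have hg : 1 + gamma ^+ 2 != 0 by rewrite gt_eqF // ltr_pwDl // sqr_ge0.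
rewrite /Lambda /Defs.iota /collision /= Acal_mul.
rewrite !(mulmxDl, mulmxBl, mulNmx) -!scalemxAl !wedge_mul.
rewrite !(dotvDl, dotvDr, dotvBl, dotvBr, dotvZl, dotvZr, dotvNl, dotvNr).
rewrite ?(dotvC e nu) ?ne ?ee ?nn ?(skew_dot0 _ hU) ?(skew_dot nu e hU).
move: (dotv u e) (dotv u nu) (dotv (U *m nu) e) (U *m e) (U *m nu) => s1 s2 s3 Ue Un.
apply/matrixP => i j; rewrite !mxE /cpar /spar.
have gn : gamma != 0 by rewrite gt_eqF.
have rn : r != 0 by rewrite gt_eqF.
by field; rewrite hg gn rn.
Qed.

Lemma solve_fix (R : realType) (n : nat) (Q P : 'M[R]_n) :
  Q *m P = P -> P *m Q = P -> P *m P = P ->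
  (forall v : 'cV[R]_n, Q *m v = v -> P *m v = v) ->
  forall z : 'cV[R]_n, exists y, z - P *m z = y - Q *m y.
Proof.
move=> QP PQ PP hfix z.
pose M := 1%:M - Q + P.
have inj : forall v : 'cV[R]_n, M *m v = 0 -> v = 0.
  move=> v Mv.
  have Pv : P *m v = 0.
    have := congr1 (mulmx P) Mv.
    by rewrite mulmx0 /M mulmxA mulmxDr mulmxBr mulmx1 PQ PP subrr add0r.
  move: Mv; rewrite /M mulmxDl mulmxBl mul1mx Pv addr0 => /eqP.
  rewrite subr_eq0 => /eqP Qv; rewrite -Pv hfix //.
have unitM : M \in unitmx.
  rewrite unitmxE unitfE -det_tr; apply/negP => /det0P [v vn0 vM].
  have := inj v^T; rewrite -(trmxK M) -trmx_mul vM linear0 => /(_ erefl) h.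
  by move: vn0; rewrite -(trmxK v) h linear0 eqxx.
have PM : P *m M = P by rewrite /M mulmxDr mulmxBr mulmx1 PQ PP subrr add0r.
have PMi : P *m invmx M = P by rewrite -{1}PM -mulmxA mulmxV // mulmx1.
exists (invmx M *m (z - P *m z)).
have -> : forall y : 'cV[R]_n, y - Q *m y = M *m y - P *m y.
  by move=> y; rewrite /M mulmxDl mulmxBl mul1mx addrK.
by rewrite mulmxA mulmxV // mul1mx mulmxA PMi mulmxBr mulmxA PP subrr subr0.
Qed.

Lemma iter_mulmx (R : realType) (n : nat) (Q : 'M[R]_n) m (v : 'cV[R]_n) :
  iter m (mulmx Q) v = iter m (mulmx Q) 1%:M *m v.
Proof. by elim: m => [|m IH] /=; rewrite ?mul1mx // IH mulmxA. Qed.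

Lemma iter_comm (R : realType) (n : nat) (Q : 'M[R]_n) m :
  iter m (mulmx Q) 1%:M *m Q = Q *m iter m (mulmx Q) 1%:M.
Proof. by elim: m => [|m IH] /=; rewrite ?mul1mx ?mulmx1 // -mulmxA IH. Qed.

Lemma iter_fixP (R : realType) (n : nat) (Q P : 'M[R]_n) m :
  Q *m P = P -> iter m (mulmx Q) 1%:M *m P = P.
Proof. by move=> QP; elim: m => [|m IH] /=; rewrite ?mul1mx // -mulmxA IH. Qed.

Lemma orth_dot (R : realType) (n : nat) (Q : 'M[R]_n) (x : 'cV[R]_n) :
  Q^T *m Q = 1%:M -> dotv (Q *m x) (Q *m x) = dotv x x.
Proof. by move=> h; rewrite dotv_mull mulmxA h mul1mx. Qed.

Lemma iter_orth (R : realType) (n : nat) (Q : 'M[R]_n) m (x : 'cV[R]_n) :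
  Q^T *m Q = 1%:M -> dotv (iter m (mulmx Q) x) (iter m (mulmx Q) x) = dotv x x.
Proof. by move=> h; elim: m => [|m IH] //=; rewrite orth_dot. Qed.

Lemma tr_dot (R : realType) (n : nat) (e x : 'cV[R]_n) :
  dotv e e = 1 -> dotv (transverse e x) e = 0.
Proof. by move=> ee; rewrite /transverse dotvBl dotvZl ee mulr1 subrr. Qed.

Lemma tr_norm (R : realType) (n : nat) (e x : 'cV[R]_n) :
  dotv e e = 1 -> dotv x x = dotv (transverse e x) (transverse e x) + dotv x e ^+ 2.
Proof.
move=> ee.
have ax : x = transverse e x + dotv x e *: e by rewrite /transverse subrK.
have ht := tr_dot x ee.
move: (transverse e x) ht ax => t ht ax.
rewrite {1 2}ax dotvDl !dotvDr !dotvZl !dotvZr ht ee (dotvC e t) ht.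
by rewrite mulr0 addr0 add0r mulr1 expr2.
Qed.

Unset Implicit Arguments.

Theorem theorem5p2 (R : realType) (n : nat) (gamma r : R)
  (e : 'cV[R]_n) (nu : 'cV[R]_n -> 'cV[R]_n)
  (a u : nat -> 'cV[R]_n) (U : nat -> 'M[R]_n) :
  0 < gamma -> 0 < r ->
  dotv e e = 1 ->
  (forall x, dotv (nu x) (nu x) = 1) ->
  (forall x, dotv (nu x) e = 0) ->
  (forall x t, nu (x + t *: e) = nu x) ->
  (forall j, (U j)^T = - U j) ->
  (forall j, a j.+1 = a j + u j) ->
  (forall j, (u j.+1, U j.+1) = collision gamma r (nu (a j.+1)) (u j, U j)) ->
  dotv (a 0) e = 0 ->
  (forall j, transverse e (a j.+2) = transverse e (a j)) ->
  let h := fun l => dotv (a l) e in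
  let A1 := Acal gamma e (nu (a 1)) in
  let A2 := Acal gamma e (nu (a 2)) in
  let Q := A1 *m A2 in
  let xi : 'rV[R]_n := (1 + cpar gamma) *: e^T - spar gamma *: (nu (a 1))^T in
  let Lambda0 := Lambda gamma r e (u 0) (U 0) in
  (Q^T *m Q = 1%:M /\ \det Q = 1) /\
  forall P : 'M[R]_n, is_orth_proj P (fun v => Q *m v = v) ->
    let k := (xi *m P *m Lambda0) 0 0 in
    (exists hhat : nat -> R,
        (exists M, forall l, `|hhat l| <= M) /\
        forall l, h l = hhat l + (l./2)%:R * k) /\
    ((fun l : nat => h l / l%:R) @ \oo --> k / 2) /\
    ((forall v : 'cV[R]_n, Q *m v = v -> v = (0 : 'cV[R]_n)) ->
        exists M, forall j, dotv (a j) (a j) <= M) /\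
    ((exists v : 'cV[R]_n, Q *m v = v /\ (xi *m v) 0 0 != 0) ->
        xi *m P != (0 : 'rV[R]_n) /\
        (k != 0 -> ~ exists M, forall j, dotv (a j) (a j) <= M)).
Proof.
move=> g0 r0 ee nn ne nuT hU ha hc h0 htr h A1 A2 Q xi Lambda0.
pose L := fun j => Lambda gamma r e (u j) (U j).
have HL : forall j, L j.+1 = Acal gamma e (nu (a j.+1)) *m L j.
  move=> j; rewrite /L.
  have e1 : u j.+1 = (collision gamma r (nu (a j.+1)) (u j, U j)).1 by rewrite -(hc j).
  have e2 : U j.+1 = (collision gamma r (nu (a j.+1)) (u j, U j)).2 by rewrite -(hc j).
  by rewrite e1 e2; apply: Lambda_step; by [ | apply: nn | apply: ne | apply: hU].
have Hper : forall j, nu (a j.+2) = nu (a j).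
  move=> j; have := htr j; rewrite /transverse => /eqP; rewrite subr_eq => /eqP ->.
  by rewrite -addrA -scaleNr -scalerDl nuT.
have Hnu : forall m, nu (a m.*2.+1) = nu (a 1) /\ nu (a m.*2.+2) = nu (a 2).
  elim=> [|m [IH1 IH2]]; first by [].
  by rewrite doubleS (Hper m.*2.+1) (Hper m.*2.+2) IH1 IH2.
have HLe : forall m, L m.*2 = iter m (mulmx (A2 *m A1)) Lambda0.
  elim=> [|m IH] //=.
  by rewrite doubleS !HL (Hnu m).1 (Hnu m).2 IH mulmxA.
have HLo : forall m, L m.*2.+1 = A1 *m L m.*2.
  by move=> m; rewrite HL (Hnu m).1.
have Hh : forall j, h j.+1 = h j + dotv e (L j).
  move=> j; rewrite /h /= ha dotvDl; congr (_ + _).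
  rewrite /L /Lambda /Defs.iota dotvDr !dotvZr ee (skew_dot0 _ (hU j)).
  by rewrite mulr1 mulr0 addr0.
pose xc := (1 + cpar gamma) *: e - spar gamma *: nu (a 1).
have hg : 1 + gamma ^+ 2 != 0 by rewrite gt_eqF // ltr_pwDl // sqr_ge0.
have Hxc : forall v, dotv e v + dotv e (A1 *m v) = dotv xc v.
  move=> v; rewrite (dotvC e (A1 *m v)) dotv_mull Acal_sym Acal_mul.
  rewrite /xc !(dotvDl, dotvDr, dotvBl, dotvBr, dotvNl, dotvNr, dotvZl, dotvZr) ee ne.
  rewrite /cpar /spar.
  rewrite !(dotvC v); by field.
have Hxi : forall v, (xi *m v) 0 0 = dotv xc v.
  have -> : xi = xc^T by apply/matrixP=> i j; rewrite !mxE.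
  by [].
have A1s : A1^T = A1 by exact: Acal_sym.
have A2s : A2^T = A2 by exact: Acal_sym.
have A1i : A1 *m A1 = 1%:M by exact: Acal_invol.
have A2i : A2 *m A2 = 1%:M by exact: Acal_invol.
have QT : Q^T = A2 *m A1 by rewrite trmx_mul A1s A2s.
split.
  split; first by rewrite QT mulmxA -(mulmxA A2) A1i mulmx1 A2i.
  by rewrite det_mulmx !Acal_det // mulN1r opprK.
move=> P [PT [PP PS]] k.
have QP : Q *m P = P.
  apply: mx_eq_vec => v; rewrite -mulmxA; apply/PS.
  by rewrite mulmxA PP.
pose Q' := A2 *m A1.
have QQ' : Q *m Q' = 1%:M by rewrite /Q /Q' mulmxA -(mulmxA A1) A2i mulmx1 A1i.
have Q'Q : Q' *m Q = 1%:M by rewrite /Q /Q' mulmxA -(mulmxA A2) A1i mulmx1 A2i.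
have Q'P : Q' *m P = P by rewrite -{1}QP mulmxA Q'Q mul1mx.
have PQ' : P *m Q' = P.
  by have := congr1 trmx QP; rewrite trmx_mul PT QT.
have fixQ' : forall v : 'cV[R]_n, Q' *m v = v -> P *m v = v.
  move=> v hv; apply/PS; by rewrite -{1}hv mulmxA QQ' mul1mx.
have [y Hy] := solve_fix Q'P PQ' PP fixQ' Lambda0.
have Q'orth : Q'^T *m Q' = 1%:M by rewrite /Q' trmx_mul A1s A2s.
pose z := fun m => iter m (mulmx Q') y.
have Hk : k = dotv xc (P *m Lambda0) by rewrite /k -mulmxA Hxi.
have Hev : forall m, dotv xc (L m.*2) = k + dotv xc (z m) - dotv xc (z m.+1).
  move=> m.
  have eL : Lambda0 = P *m Lambda0 + (y - Q' *m y) by rewrite -Hy addrC subrK.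
  rewrite HLe iter_mulmx eL mulmxDr mulmxA iter_fixP // mulmxBr mulmxA iter_comm.
  by rewrite -!mulmxA -!iter_mulmx dotvDr dotvBr Hk /z /= !mulmxA addrA.
have Hh2 : forall m, h m.*2 = m%:R * k + dotv xc y - dotv xc (z m).
  elim=> [|m IH].
    by rewrite /= /h h0 /z /= mul0r add0r subrr.
  rewrite doubleS Hh Hh -addrA (HLo m) Hxc Hev IH -[m.+1]addn1 natrD.
  ring.
have HLn : forall j, dotv (L j) (L j) = dotv Lambda0 Lambda0.
  elim=> [|j IH] //; rewrite HL orth_dot // Acal_sym Acal_invol //.
have Hzn : forall m, dotv (z m) (z m) = dotv y y by move=> m; exact: iter_orth.
pose Mb := `|dotv xc y| + (dotv xc xc + dotv y y) / 2 + (dotv e e + dotv Lambda0 Lambda0) / 2.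
pose hhat := fun l : nat => h l - (l./2)%:R * k.
have Hhh : forall l, h l = hhat l + (l./2)%:R * k by move=> l; rewrite /hhat subrK.
have dya := ler_norm (dotv xc y).
have dyb : - dotv xc y <= `|dotv xc y| by rewrite -normrN ler_norm.
have Hbound : forall l, `|hhat l| <= Mb.
  move=> l; rewrite /hhat -(odd_double_half l) half_bit_double.
  case: (odd l); rewrite ?add1n ?add0n.
    have b1 := dot_abs_le xc (z l./2); have b2 := dot_abs_le e (L (l./2).*2).
    rewrite Hzn in b1; rewrite HLn in b2.
    move: b1 b2; rewrite !ler_norml => /andP [b1 b1'] /andP [b2 b2'].
    rewrite Hh Hh2 /Mb; lra.
  have b1 := dot_abs_le xc (z l./2).
  rewrite Hzn in b1.
  move: b1; rewrite !ler_norml => /andP [b1 b1'].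
  have := dotv_ge0 Lambda0; rewrite Hh2 /Mb ee; lra.
have Mb0 : 0 <= Mb by apply: le_trans (Hbound 0%N).
split.
  exists hhat; split => //; by exists Mb.
have kabs : - `|k| <= k <= `|k|.
  by rewrite -ler_norml.
split.
  apply/cvgrPdist_le => eps eps0.
  pose B := (`|k| + Mb) / eps.
  have B0 : 0 <= B by apply: divr_ge0; [exact: addr_ge0 | exact: ltW].
  exists (Num.Def.archi_bound B).+1 => // l /= hl.
  have hB := archi_boundP B0.
  have lB : B < l%:R.
    apply: lt_le_trans hB _; rewrite ler_nat; exact: ltnW.
  have Hb := Hbound l.
  move: Hb lB; rewrite /hhat -(odd_double_half l) half_bit_double.
  move: (h _) => X; set m := l./2.
  have m0 : 0 <= m%:R :> R by [].
  rewrite /B ltr_pdivrMr // => Hb lB.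
  move: kabs => /andP [k1 k2]; have k0 := normr_ge0 k.
  move: Hb; rewrite ler_norml => /andP [Hb1 Hb2].
  have e1 : (m.*2.+1)%:R = 1 + 2%:R * m%:R :> R by rewrite -addn1 natrD -mul2n natrM addrC.
  have e0 : (m.*2)%:R = 2%:R * m%:R :> R by rewrite -mul2n natrM.
  case: (odd l) lB => lB; rewrite ?add1n ?add0n in lB *; rewrite ?e1 ?e0 in lB *.
    have pos : 0 < 1 + 2%:R * m%:R :> R by lra.
    have -> : k / 2 - X / (1 + 2%:R * m%:R) = (k / 2 + (m%:R * k - X)) / (1 + 2%:R * m%:R).
      by field; rewrite gt_eqF.
    rewrite normrM [X in _ * X]ger0_norm ?invr_ge0 ?(ltW pos) // ler_pdivrMr //.
    rewrite ler_norml; apply/andP; split; lra.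
  have pos : 0 < 2%:R * m%:R :> R by nra.
  have -> : k / 2 - X / (2%:R * m%:R) = (m%:R * k - X) / (2%:R * m%:R).
    by field; rewrite gt_eqF //; nra.
  rewrite normrM [X in _ * X]ger0_norm ?invr_ge0 ?(ltW pos) // ler_pdivrMr //.
  rewrite ler_norml; apply/andP; split; lra.
pose T := fun j => transverse e (a j).
have HT : forall m, T m.*2 = T 0%N /\ T m.*2.+1 = T 1%N.
  elim=> [|m [IH1 IH2]]; first by [].
  by rewrite doubleS /T !htr.
have Ha : forall j, dotv (a j) (a j) = dotv (T j) (T j) + h j ^+ 2.
  by move=> j; rewrite /T /h /= -tr_norm.
have HTb : forall j, dotv (T j) (T j) <= dotv (T 0%N) (T 0%N) + dotv (T 1%N) (T 1%N).
  move=> j; rewrite -(odd_double_half j).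
  have t0 := dotv_ge0 (T 0%N); have t1 := dotv_ge0 (T 1%N).
  case: (odd j); rewrite ?add1n ?add0n.
    rewrite (HT _).2; lra.
  rewrite (HT _).1; lra.
split.
  move=> Hfix.
  have P0 : forall v : 'cV[R]_n, P *m v = 0.
    by move=> v; apply: (Hfix (P *m v)); rewrite mulmxA QP.
  have k0 : k = 0 by rewrite Hk P0 dotv0r.
  exists (dotv (T 0%N) (T 0%N) + dotv (T 1%N) (T 1%N) + Mb ^+ 2) => j.
  rewrite Ha; have := HTb j; have := Hbound j; rewrite /hhat k0 mulr0 subr0.
  rewrite ler_norml => /andP [hb1 hb2] ht.
  nra.
move=> [v [Qv xv]]; split.
  apply/negP => /eqP xP0.
  have Pv : P *m v = v by apply/PS.
  by move: xv; rewrite -Pv mulmxA xP0 mul0mx mxE eqxx.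
move=> kn0 [M HM].
have HMb : forall m, `|m%:R * k| <= 1 + M + Mb.
  move=> m; have := Hbound m.*2; rewrite /hhat doubleK.
  have := HM m.*2; rewrite Ha.
  have := dotv_ge0 (T m.*2).
  move: (h m.*2) => X.
  rewrite !ler_norml => t0 hx /andP [hb1 hb2].
  apply/andP; split; nra.
have M0 : 0 <= M by apply: le_trans (HM 0%N); exact: dotv_ge0.
have kp : 0 < `|k| by rewrite normr_gt0.
have C0 : 0 <= (1 + M + Mb) / `|k| by apply: divr_ge0; [lra | exact: ltW].
have := archi_boundP C0.
rewrite ltr_pdivrMr // => hlt.
have := HMb (Num.Def.archi_bound ((1 + M + Mb) / `|k|)).
by rewrite normrM ger0_norm // leNgt hlt.
Qed.
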